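(* Let $F\subset\mathbb{R}^2_{\geq}$ be a compact convex polygon with vertices $P_1,\dots,P_n$ ordered clockwise, and let $\tau_1$ be the extremal ray of $L_{\mathbb{Q}_{\geq}}(F)$ with the greater slope. Suppose $\tau_1\cap F=\{P_1\}$. For $i\in\mathbb{N}$, let $V_i$ denote the intersection point of the segments $\overline{(iP_1)(iP_2)}$ and $\overline{((i+1)P_n)((i+1)P_1)}$, whenever these segments intersect. Then there is a line parallel to $\tau_1$ containing every such point $V_i$.
   Context: $\mathbb{N}=\{0,1,2,\dots\}$; $\overline{XY}$ is the closed segment from $X$ to $Y$. For $A\subseteq\mathbb{R}^2_{\geq}$, $L_{\mathbb{Q}_{\geq}}(A)=\{\sum_{i=1}^p q_ia_i\mid p\in\mathbb{N},\ q_i\in\mathbb{Q}_{\geq},\ a_i\in A\}$ and its extremal rays are its two boundary half-lines from the origin. *)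

(* Defs.v *)
From HB Require Import structures.
From mathcomp Require Import all_boot all_order all_algebra.
From mathcomp Require Import reals.
Set Implicit Arguments. Unset Strict Implicit. Unset Printing Implicit Defensive.
Import Order.TTheory GRing.Theory Num.Theory.
Local Open Scope ring_scope.

Section Geom.
Variable R : realType.
Definition pt := (R * R)%type.

Definition padd (x y : pt) : pt := (x.1 + y.1, x.2 + y.2).
Definition psub (x y : pt) : pt := (x.1 - y.1, x.2 - y.2).
Definition pscale (a : R) (x : pt) : pt := (a * x.1, a * x.2).
(* cross u x <= 0  iff x lies clockwise of (on the right of) u *)
Definition cross (u x : pt) : R := u.1 * x.2 - u.2 * x.1.

Definition seg (X Y : pt) : pt -> Prop :=
  fun Z => exists s : R, 0 <= s <= 1 /\ Z = padd (pscale (1 - s) X) (pscale s Y).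

Definition ray (u : pt) : pt -> Prop :=
  fun x => exists t : R, 0 <= t /\ x = pscale t u.

Definition LQ (A : pt -> Prop) : pt -> Prop :=
  fun x => exists s : seq (rat * pt),
    (forall qa, qa \in s -> 0 <= qa.1 /\ A qa.2) /\
    x = foldr padd (0, 0) [seq pscale (ratr qa.1) qa.2 | qa <- s].

(* ray u is the boundary half-line of L_{Q>=}(A) with the greater slope:
   it lies in the closure of the cone and the whole cone is on its
   clockwise (lower-slope) side. *)
Definition upper_extremal_ray (A : pt -> Prop) (u : pt) : Prop :=
  u != (0, 0) /\
  (forall x, LQ A x -> cross u x <= 0) /\
  (forall t e : R, 0 <= t -> 0 < e -> exists x, LQ A x /\
      `|x.1 - t * u.1| < e /\ `|x.2 - t * u.2| < e).

Definition nxt (n i : nat) : nat := if i == n then 1%N else i.+1.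

(* P 1, ..., P n are the vertices of a (nondegenerate) compact convex polygon
   listed clockwise: every other vertex lies strictly to the right of each
   directed edge P_i -> P_(i+1). *)
Definition clockwise_convex_polygon (n : nat) (P : nat -> pt) : Prop :=
  (3 <= n)%N /\
  forall i j, (1 <= i <= n)%N -> (1 <= j <= n)%N -> j != i -> j != nxt n i ->
    cross (psub (P (nxt n i)) (P i)) (psub (P j) (P i)) < 0.

Definition hull (n : nat) (P : nat -> pt) : pt -> Prop :=
  fun x => exists w : nat -> R,
    (forall j, 0 <= w j) /\ \sum_(1 <= j < n.+1) w j = 1 /\
    x.1 = \sum_(1 <= j < n.+1) w j * (P j).1 /\
    x.2 = \sum_(1 <= j < n.+1) w j * (P j).2.

Definition in_quadrant (x : pt) : Prop := 0 <= x.1 /\ 0 <= x.2.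
End Geom.

(* Main.v *)
Require Import Defs.
From HB Require Import structures.
From mathcomp Require Import all_boot all_order all_algebra.
From mathcomp Require Import reals.
From mathcomp Require Import ring lra.
Import Order.TTheory GRing.Theory Num.Theory.
Local Open Scope ring_scope.

Theorem lemma3p2 (R : realType) (n : nat) (P : nat -> pt R) (u : pt R) :
  clockwise_convex_polygon n P ->
  (forall j, (1 <= j <= n)%N -> in_quadrant (P j)) ->
  upper_extremal_ray (hull n P) u ->
  (forall x, (hull n P x /\ ray u x) <-> x = P 1%N) ->
  exists c : R, forall (i : nat) (V : pt R),
    seg (pscale i%:R (P 1%N)) (pscale i%:R (P 2%N)) V ->
    seg (pscale i.+1%:R (P n)) (pscale i.+1%:R (P 1%N)) V ->
    cross u V = c.
Proof.
move=> [n3 Hpol] _ _ H4.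
have [t [_ Ht]] := (proj2 (H4 (P 1%N)) erefl).2.
have cu1 : cross u (P 1%N) = 0 by rewrite Ht /cross /=; ring.
have HD : cross (psub (P 2%N) (P 1%N)) (psub (P n) (P 1%N)) < 0.
  have n1 : n != 1%N by apply/eqP => e; rewrite e in n3.
  have n2 : n != 2%N by apply/eqP => e; rewrite e in n3.
  have e : ((1%N == n) = false) by rewrite eq_sym; exact: negbTE.
  move: (Hpol 1%N n); rewrite /nxt e; apply => //.
  - by rewrite leqnn; apply: leq_trans n3.
  - by rewrite leqnn andbT; apply: leq_trans n3.
set D := cross _ _ in HD.
have D0 : D != 0 by rewrite lt_eqF.
exists (cross (P 1%N) (psub (P n) (P 1%N)) / D * cross u (psub (P 2%N) (P 1%N))).
move=> i V [s [_ ->]] [r [_ E]].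
move: E; rewrite /padd /pscale /= => -[E1 E2].
rewrite -[i.+1]addn1 natrD in E1 E2.
pose a := i%:R * s. pose b := (i%:R + 1) * (1 - r).
have k1 : (P 1%N).1 - a * ((P 2%N).1 - (P 1%N).1) + b * ((P n).1 - (P 1%N).1) = 0.
  transitivity (((1 - r) * ((i%:R + 1) * (P n).1) + r * ((i%:R + 1) * (P 1%N).1)) -
     ((1 - s) * (i%:R * (P 1%N).1) + s * (i%:R * (P 2%N).1))); last by rewrite E1 subrr.
  rewrite /a /b; ring.
have k2 : (P 1%N).2 - a * ((P 2%N).2 - (P 1%N).2) + b * ((P n).2 - (P 1%N).2) = 0.
  transitivity (((1 - r) * ((i%:R + 1) * (P n).2) + r * ((i%:R + 1) * (P 1%N).2)) -
     ((1 - s) * (i%:R * (P 1%N).2) + s * (i%:R * (P 2%N).2))); last by rewrite E2 subrr.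
  rewrite /a /b; ring.
have kD : cross (P 1%N) (psub (P n) (P 1%N)) = a * D.
  apply/eqP; rewrite -subr_eq0; apply/eqP.
  transitivity (((P 1%N).1 - a * ((P 2%N).1 - (P 1%N).1) + b * ((P n).1 - (P 1%N).1)) * ((P n).2 - (P 1%N).2)
     - ((P 1%N).2 - a * ((P 2%N).2 - (P 1%N).2) + b * ((P n).2 - (P 1%N).2)) * ((P n).1 - (P 1%N).1));
    last by rewrite k1 k2 !mul0r subrr.
  rewrite /D /cross /psub /=; ring.
rewrite kD mulfK //.
transitivity (i%:R * cross u (P 1%N) + a * cross u (psub (P 2%N) (P 1%N))).
  rewrite /a /cross /psub /=; ring.
by rewrite cu1 mulr0 add0r.
Qed.
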